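(* Let $\{f_j^\lambda\}$ be a parametrized IFS satisfying (MA1)–(MA4) and (MT) (with constant $\eta$) on $U\subset\mathbb R^d$. Then for every $\lambda_0\in U$ there exists an open ball $B(\lambda_0,\varepsilon_0)\subset U$ such that for every $\omega,\tau\in\Sigma$ with $\omega_1\ne\tau_1$ there is a unit vector $e\in\mathbb R^d$ such that for every $p\in B(0,\varepsilon_0)\cap\mathrm{span}(e)^\perp$ and every $t\in J_p=\{t\in\mathbb R:p+te\in B(0,\varepsilon_0)\}$, $$|\Pi^{\lambda_0+p+te}(\omega)-\Pi^{\lambda_0+p+te}(\tau)|<\eta/2\implies\Big|\tfrac{d}{dt}\big(\Pi^{\lambda_0+p+te}(\omega)-\Pi^{\lambda_0+p+te}(\tau)\big)\Big|\ge\eta/2.$$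
   Context: Setup: $X\subset\mathbb R$ compact interval, $\mathcal A=\{1,\dots,m\}$, $\Sigma=\mathcal A^{\mathbb N}$, $\omega_1$ the first symbol of $\omega$, $f^\lambda_\omega$ compositions, $\Pi^\lambda(\mathbf i)=\lim_nf^\lambda_{\mathbf i|_n}(x)$. $U\subset\mathbb R^d$ bounded open. (MA1)–(MA4), $\delta\in(0,1)$: $f^\lambda_j$ is $C^{2+\delta}$ in $x$, $C^{1+\delta}$ in $\lambda$, with continuous mixed partials $\partial^2 f/\partial x\partial\lambda_i$, these derivatives uniformly bounded and uniformly $\delta$-Hölder in $x$ and $\lambda$; $0<\gamma_1\le|\frac d{dx}f^\lambda_j|\le\gamma_2<1$. (MT): there is $\eta>0$ such that for all $\lambda\in\overline U$ and $\mathbf i,\mathbf j$ with $i_1\ne j_1$, $|\Pi^\lambda(\mathbf i)-\Pi^\lambda(\mathbf j)|<\eta\Rightarrow|\nabla_\lambda(\Pi^\lambda(\mathbf i)-\Pi^\lambda(\mathbf j))|\ge\eta$. *)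

(* Defs.v *)
From HB Require Import structures.
From mathcomp Require Import all_boot all_order all_algebra.
From mathcomp Require Import all_classical all_reals all_analysis.
Set Implicit Arguments. Unset Strict Implicit. Unset Printing Implicit Defensive.
Import Order.TTheory GRing.Theory Num.Theory.
Import numFieldNormedType.Exports.
Local Open Scope classical_set_scope.
Local Open Scope ring_scope.

Section Defs.
Variables (R : realType) (d m : nat).

Definition edot (u v : 'rV[R]_d) : R := \sum_(i < d) u 0 i * v 0 i.
Definition enorm (u : 'rV[R]_d) : R := Num.sqrt (edot u u).

Definition ebasis (i : 'I_d) : 'rV[R]_d := delta_mx 0 i.

Definition grad (g : 'rV[R]_d -> R) (lam : 'rV[R]_d) : 'rV[R]_d :=
  \row_(i < d) ('D_(ebasis i) g lam).

(* the IFS: f j lam x = f_j^lam(x), j in A = 'I_m *)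
Variable f : 'I_m -> 'rV[R]_d -> R -> R.

(* f^lam_{w|n}(x) = f^lam_{w_1} o ... o f^lam_{w_n} (x), with w_1 = w 0 *)
Fixpoint fcomp (lam : 'rV[R]_d) (w : nat -> 'I_m) (n : nat) (x : R) : R :=
  match n with
  | 0 => x
  | n'.+1 => fcomp lam w n' (f (w n') lam x)
  end.

Definition Pi (x0 : R) (lam : 'rV[R]_d) (w : nat -> 'I_m) : R :=
  limn (fun n => fcomp lam w n x0).

Definition Dx (j : 'I_m) (lam : 'rV[R]_d) (x : R) : R := derive1 (f j lam) x.
Definition Dxx (j : 'I_m) (lam : 'rV[R]_d) (x : R) : R := derive1 (Dx j lam) x.
Definition Dl (i : 'I_d) (j : 'I_m) (lam : 'rV[R]_d) (x : R) : R :=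
  'D_(ebasis i) (fun l => f j l x) lam.
Definition Dxl (i : 'I_d) (j : 'I_m) (lam : 'rV[R]_d) (x : R) : R :=
  'D_(ebasis i) (fun l => Dx j l x) lam.

Definition bounded_on (V : set 'rV[R]_d) (a b C : R) (g : 'rV[R]_d -> R -> R) :=
  forall lam x, V lam -> a <= x <= b -> `|g lam x| <= C.
Definition hoelder_on (V : set 'rV[R]_d) (a b C delta : R)
  (g : 'rV[R]_d -> R -> R) :=
  (forall lam x y, V lam -> a <= x <= b -> a <= y <= b ->
     `|g lam x - g lam y| <= C * powR `|x - y| delta) /\
  (forall lam mu x, V lam -> V mu -> a <= x <= b ->
     `|g lam x - g mu x| <= C * powR (enorm (lam - mu)) delta).

(* (MA1)-(MA4) on the compact interval X = [a,b], parameters in V *)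
Definition MA (V : set 'rV[R]_d) (a b delta gamma1 gamma2 : R) : Prop :=
  [/\ (forall j lam x, V lam -> a <= x <= b -> a <= f j lam x <= b),
      (forall j lam x, V lam -> a <= x <= b ->
          derivable (f j lam) x 1 /\ derivable (Dx j lam) x 1 /\
          forall i, derivable (fun l => f j l x) lam (ebasis i) /\
                    derivable (fun l => Dx j l x) lam (ebasis i)),
      (exists C, forall j,
          [/\ bounded_on V a b C (Dx j), bounded_on V a b C (Dxx j),
              hoelder_on V a b C delta (Dxx j) &
              forall i, [/\ bounded_on V a b C (Dl i j), bounded_on V a b C (Dxl i j),
                            hoelder_on V a b C delta (Dl i j) &
                            hoelder_on V a b C delta (Dxl i j)]]) &
      (forall j lam x, V lam -> a <= x <= b ->
          gamma1 <= `|Dx j lam x| <= gamma2)].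

Definition MT (U : set 'rV[R]_d) (a eta : R) : Prop :=
  forall lam (w t : nat -> 'I_m), closure U lam -> w 0%N != t 0%N ->
    `|Pi a lam w - Pi a lam t| < eta ->
    enorm (grad (fun l => Pi a l w - Pi a l t) lam) >= eta.

End Defs.

(* Main.v *)
Require Import Defs.
From HB Require Import structures.
From mathcomp Require Import all_boot all_order all_algebra.
From mathcomp Require Import all_classical all_reals all_analysis.
From mathcomp Require Import ring lra.
Set Implicit Arguments. Unset Strict Implicit. Unset Printing Implicit Defensive.
Import Order.TTheory GRing.Theory Num.Theory.
Import numFieldNormedType.Exports.
Local Open Scope classical_set_scope.
Local Open Scope ring_scope.

Section Gen.
Variable R : realType.

Lemma geo_squeeze (x y c q : R) : 0 <= q < 1 ->
  (forall n, x <= y + c * q ^+ n) -> x <= y.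
Proof.
move=> /andP[q0 q1] H.
have h : (fun n => y + c * q ^+ n) @ \oo --> y.
  rewrite -[X in _ --> X]addr0; apply: cvgD; first exact: cvg_cst.
  rewrite -(mulr0 c); apply: cvgMr; apply: cvg_expr.
  by rewrite ger0_norm.
rewrite -(cvg_lim _ h) //; apply: limr_ge; first by apply/cvg_ex; exists y.
by near=> n; apply: H.
Unshelve. all: by end_near.
Qed.

Lemma contr_bound (T : Type) (sh : T -> T) (P : T -> R) (A M q : R) :
  0 <= q < 1 -> 0 <= A -> (forall t, P t <= M) ->
  (forall t, P t <= A + q * P (sh t)) -> forall t, P t <= A / (1 - q).
Proof.
move=> /andP[q0 q1] A0 HM Hr.
have q1' : 0 < 1 - q by rewrite subr_gt0.
have key : forall n t, P t <= A * (1 - q ^+ n) / (1 - q) + M * q ^+ n.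
  elim=> [|n IH] t; first by rewrite expr0 subrr mulr0 mul0r add0r mulr1.
  apply: (le_trans (Hr t)).
  apply: le_trans (_ : A + q * (A * (1 - q ^+ n) / (1 - q) + M * q ^+ n) <= _).
    by rewrite lerD2l; apply: ler_wpM2l.
  rewrite le_eqVlt; apply/orP; left; apply/eqP; rewrite exprS.
  by field; rewrite subr_eq0 eq_sym lt_eqF.
move=> t; apply: (@geo_squeeze _ _ M q); first by rewrite q0.
move=> n; apply: (le_trans (key n t)); rewrite lerD2r.
rewrite ler_pdivrMr // divfK ?gt_eqF //.
rewrite -[X in _ <= X]mulr1; apply: ler_wpM2l => //.
by rewrite gerBl exprn_ge0.
Qed.

Lemma geo_cvg (u : R ^nat) (lo c q : R) : 0 <= q < 1 -> 0 <= c ->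
  (forall n, lo <= u n) -> (forall n, `|u n.+1 - u n| <= c * q ^+ n) -> cvgn u.
Proof.
move=> /andP[q0 q1] c0 Hlo Hd.
have q1' : 0 < 1 - q by rewrite subr_gt0.
set k := c / (1 - q).
have k0 : 0 <= k by rewrite divr_ge0 // ltW.
pose v n := u n + k * q ^+ n.
have vS n : v n.+1 <= v n.
  have h1 := le_trans (ler_norm _) (Hd n).
  have e : k * q ^+ n - k * q ^+ n.+1 = c * q ^+ n.
    by rewrite /k exprS; field; rewrite subr_eq0 eq_sym lt_eqF.
  rewrite /v; lra.
have vdec : {homo v : n m / (n <= m)%N >-> m <= n}.
  move=> n m /subnK <-; elim: (m - n)%N => [|p IH]; first by rewrite add0n.
  by rewrite addSn; apply: le_trans (vS _) IH.
have vlb : has_lbound (range v).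
  exists lo => _ [n _ <-]; rewrite /v -[lo]addr0; apply: lerD => //.
  by rewrite mulr_ge0 // exprn_ge0.
have cv : cvgn v by apply/cvg_ex; eexists; apply: nonincreasing_cvgn.
have cg : cvgn (fun n => k * q ^+ n).
  apply/cvg_ex; exists (k * 0); apply: cvgMr; apply: cvg_expr.
  by rewrite ger0_norm.
have -> : u = v - (fun n => k * q ^+ n).
  by apply/funext => n; rewrite /v /= addrK.
exact: is_cvgB.
Qed.

End Gen.

Section Norms.
Variables (R : realType) (d : nat).
Implicit Types u v : 'rV[R]_d.

Definition n1 v : R := \sum_(i < d) `|v 0 i|.

Lemma n1_ge0 v : 0 <= n1 v.
Proof. by apply: sumr_ge0 => i _. Qed.

Lemma coord_le_n1 v i : `|v 0 i| <= n1 v.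
Proof.
rewrite /n1 (bigD1 i) //= lerDl; by apply: sumr_ge0.
Qed.

Lemma edot_ge0 v : 0 <= edot v v.
Proof. by apply: sumr_ge0 => i _; rewrite -expr2 sqr_ge0. Qed.

Lemma coord_le_enorm v i : `|v 0 i| <= enorm v.
Proof.
rewrite /enorm -sqrtr_sqr; rewrite ler_sqrt ?edot_ge0 //.
rewrite /edot (bigD1 i) //= expr2 lerDl; apply: sumr_ge0 => j _.
by rewrite -expr2 sqr_ge0.
Qed.

Lemma enorm_le_n1 v : enorm v <= n1 v.
Proof.
rewrite /enorm -(ger0_norm (n1_ge0 v)) -sqrtr_sqr ler_sqrt ?sqr_ge0 //.
rewrite expr2 /edot mulr_suml; apply: ler_sum => i _.
apply: le_trans (ler_norm _) _; rewrite normrM.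
apply: ler_wpM2l => //; exact: coord_le_n1.
Qed.

Lemma n1_le_enorm v : n1 v <= d%:R * enorm v.
Proof.
apply: le_trans (_ : \sum_(i < d) enorm v <= _).
  by apply: ler_sum => i _; exact: coord_le_enorm.
by rewrite sumr_const card_ord mulr_natl.
Qed.

Lemma n1D u v : n1 (u + v) <= n1 u + n1 v.
Proof.
rewrite /n1 -big_split /=; apply: ler_sum => i _; rewrite mxE; exact: ler_normD.
Qed.

Lemma n1Z (c : R) v : n1 (c *: v) = `|c| * n1 v.
Proof. by rewrite /n1 mulr_sumr; apply: eq_bigr => i _; rewrite mxE normrM. Qed.

Lemma n1N v : n1 (- v) = n1 v.
Proof. by rewrite /n1; apply: eq_bigr => i _; rewrite mxE normrN. Qed.

Lemma n1B u v : n1 (u - v) = n1 (v - u).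
Proof. by rewrite -n1N opprB. Qed.

Lemma n1_le u v : (forall i, `|u 0 i| <= `|v 0 i|) -> n1 u <= n1 v.
Proof. by move=> H; apply: ler_sum => i _. Qed.

Lemma edotZl (c : R) u v : edot (c *: u) v = c * edot u v.
Proof. by rewrite /edot mulr_sumr; apply: eq_bigr => i _; rewrite mxE mulrA. Qed.

Lemma edotC u v : edot u v = edot v u.
Proof. by apply: eq_bigr => i _; rewrite mulrC. Qed.

Lemma enormZ (c : R) v : enorm (c *: v) = `|c| * enorm v.
Proof.
rewrite /enorm edotZl edotC edotZl mulrA -expr2 sqrtrM ?sqr_ge0 //.
by rewrite sqrtr_sqr.
Qed.

Lemma enorm_sqr v : enorm v ^+ 2 = edot v v.
Proof. by rewrite /enorm sqr_sqrtr // edot_ge0. Qed.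

Lemma ebasisE (i j : 'I_d) : (ebasis R i) 0 j = (i == j)%:R.
Proof. by rewrite /ebasis mxE eqxx /= eq_sym. Qed.

End Norms.

Section MVT1.
Variable R : realType.

Lemma mvt1 (g dg : R -> R) (x y : R) :
  (forall z, Num.min x y <= z <= Num.max x y -> is_derive z 1 g (dg z)) ->
  exists c, Num.min x y <= c <= Num.max x y /\ g y - g x = dg c * (y - x).
Proof.
move=> H.
have gen : forall u w, u <= w ->
    (forall z : R, u <= z <= w -> is_derive z 1 g (dg z)) ->
    exists2 c, c \in `[u, w]%R & g w - g u = dg c * (w - u).
  move=> u w uw Hd; apply: MVT_segment => //.
    by move=> z; rewrite in_itv /= => /andP[h1 h2]; apply: Hd; rewrite !ltW.
  apply: derivable_within_continuous => z; rewrite in_itv /= => hz.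
  by have [] := Hd z hz.
case: leP H => xy H.
  have [c hc e] := gen x y xy H.
  by exists c; split => //; move: hc; rewrite in_itv.
have yx := ltW xy.
have [c hc e] := gen y x yx H.
exists c; split; first by move: hc; rewrite in_itv.
by rewrite -opprB e -mulrN opprB.
Qed.

Variable d : nat.

Lemma is_derive_line (F : 'rV[R]_d -> R) (q v : 'rV[R]_d) (t D : R) :
  is_derive (q + t *: v) v F D -> is_derive t 1 (fun s => F (q + s *: v)) D.
Proof.
move=> [dF vF].
have E : (fun h : R => h^-1 *: (((fun s => F (q + s *: v)) \o shift t) (h *: 1)
              - F (q + t *: v))) =
         (fun h : R => h^-1 *: ((F \o shift (q + t *: v)) (h *: v) - F (q + t *: v))).
  apply/funext => h /=; congr (_ *: (F _ - _)).
  by rewrite /shift /= scaler1 scalerDl addrCA.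
split.
  by rewrite /derivable E.
by rewrite /derive E; move: vF; rewrite /derive.
Qed.

End MVT1.

Section Coord.
Variables (R : realType) (d : nat).

Definition wk (w : 'rV[R]_d) (k : nat) : 'rV[R]_d :=
  \row_i (if (i < k)%N then w 0 i else 0).

Lemma coord_mvt (F : 'rV[R]_d -> R) (DF : 'I_d -> 'rV[R]_d -> R) (lam w : 'rV[R]_d) :
  (forall i c, n1 c <= n1 w -> is_derive (lam + c) (ebasis R i) F (DF i (lam + c))) ->
  exists c : 'I_d -> 'rV[R]_d, (forall i, n1 (c i) <= n1 w) /\
     F (lam + w) - F lam = \sum_(i < d) w 0 i * DF i (lam + c i).
Proof.
move=> HD.
have claim : forall k, (k <= d)%N -> exists c : 'I_d -> 'rV[R]_d,
    (forall i, n1 (c i) <= n1 w) /\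
    F (lam + wk w k) - F lam = \sum_(i < d | (i < k)%N) w 0 i * DF i (lam + c i).
  elim=> [|k IH] kd.
    exists (fun _ => 0); split; first by move=> i; rewrite /n1 big1 ?n1_ge0 // => j _; rewrite mxE normr0.
    have -> : wk w 0 = 0 by apply/rowP => i; rewrite !mxE.
    by rewrite addr0 subrr big_pred0.
  have kd' : (k < d)%N by [].
  have [c [Hc Hs]] := IH (ltnW kd).
  pose i0 := Ordinal kd'.
  pose G := fun s : R => F ((lam + wk w k) + s *: ebasis R i0).
  have wkE : forall s i, (wk w k + s *: ebasis R i0) 0 i =
      (if (i < k)%N then w 0 i else 0) + s * (i0 == i)%:R.
    by move=> s i; rewrite mxE [X in _ + X]mxE ebasisE mxE.
  have nb : forall s, Num.min 0 (w 0 i0) <= s <= Num.max 0 (w 0 i0) ->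
      n1 (wk w k + s *: ebasis R i0) <= n1 w.
    move=> s hs; apply: n1_le => i; rewrite wkE.
    case: (ltnP i k) => ik.
      have : i0 != i by apply/negP => /eqP ei; move: ik; rewrite -ei ltnn.
      by move/negbTE => ->; rewrite mulr0 addr0.
    case: (eqVneq i0 i) => [<-|ne]; last by rewrite mulr0 addr0 normr0.
    rewrite mulr1 add0r.
    case: (leP 0 (w 0 i0)) hs => h /andP[h1 h2].
      by rewrite !ger0_norm //; apply: le_trans h1.
    by rewrite (ltr0_norm h) ler0_norm // lerN2.
  have [xi [hxi e]] : exists c, Num.min 0 (w 0 i0) <= c <= Num.max 0 (w 0 i0) /\ G (w 0 i0) - G 0 = DF i0 (lam + (wk w k + c *: ebasis R i0)) * (w 0 i0 - 0).
    apply: (@mvt1 R G (fun s => DF i0 (lam + (wk w k + s *: ebasis R i0)))).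
    move=> s hs; apply: is_derive_line; rewrite -addrA; exact: HD (nb s hs).
  exists (fun i => if i == i0 then wk w k + xi *: ebasis R i0 else c i); split.
    by move=> i; case: eqP => _; [exact: nb|exact: Hc].
  have -> : wk w k.+1 = wk w k + w 0 i0 *: ebasis R i0.
    apply/rowP => i; rewrite wkE mxE ltnS leq_eqVlt.
    case: (ltnP i k) => ik.
      have : i0 != i by apply/negP => /eqP ei; move: ik; rewrite -ei ltnn.
      by move/negbTE => ->; rewrite mulr0 addr0 orbT.
    rewrite orbF add0r; case: (eqVneq i0 i) => [<-|ne].
      by rewrite eqxx mulr1.
    have : (i != k :> nat) by apply/negP => /eqP ei; move: ne; rewrite /i0; apply/negP; rewrite negbK; apply/eqP/val_inj.
    by move/negbTE => ->; rewrite mulr0.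
  rewrite (bigD1 i0) /=; last by rewrite ltnS.
  rewrite eqxx.
  have -> : \sum_(i < d | (i < k.+1)%N && (i != i0))
      w 0 i * DF i (lam + (if i == i0 then wk w k + xi *: ebasis R i0 else c i)) =
      \sum_(i < d | (i < k)%N) w 0 i * DF i (lam + c i).
    rewrite (eq_bigl (fun i : 'I_d => (i < k)%N)); last first.
      move=> i; rewrite ltnS leq_eqVlt; case: (eqVneq i i0) => [->|ne] /=.
        by rewrite eqxx ltnn.
      rewrite andbT; have : (i != k :> nat).
        by apply/negP => /eqP ei; move: ne; apply/negP; rewrite negbK; apply/eqP/val_inj.
      by move/negbTE => ->.
    apply: eq_bigr => i ik; case: eqP => // ei; by move: ik; rewrite ei ltnn.
  rewrite -Hs.
  have -> : F (lam + (wk w k + w 0 i0 *: ebasis R i0)) = G (w 0 i0) by rewrite /G addrA.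
  have -> : F (lam + wk w k) = G 0 by rewrite /G scale0r addr0.
  have e2 : G (w 0 i0) = DF i0 (lam + (wk w k + xi *: ebasis R i0)) * (w 0 i0 - 0) + G 0.
    by rewrite -e subrK.
  rewrite e2 subr0; ring.
have [c [Hc Hs]] := claim d (leqnn d).
exists c; split => //.
have ew : w = wk w d by apply/rowP => i; rewrite mxE ltn_ord.
rewrite {1}ew Hs; apply: eq_bigl => i; exact: ltn_ord.
Qed.

End Coord.

Section Deriv.
Variables (R : realType) (delta : R).
Hypothesis Hdel : 0 < delta.

Lemma small_powR (e : R) : 0 < e -> exists2 rho : R, 0 < rho &
  forall x, 0 <= x -> x < rho -> powR x delta < e.
Proof.
move=> e0; exists (powR e delta^-1); first by rewrite powR_gt0.
move=> x x0 xr.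
have -> : e = powR (powR e delta^-1) delta.
  by rewrite -powRrM mulVf ?gt_eqF // powRr1 // ltW.
by apply: gt0_ltr_powR; rewrite ?nnegrE ?powR_ge0.
Qed.

Lemma deriv_from_est (g : R -> R) (s D A B rho : R) : 0 < rho -> 0 <= A -> 0 <= B ->
  (forall h, h != 0 -> `|h| < rho ->
     `|g (h + s) - g s - h * D| <= `|h| * (A * powR `|h| delta + B * `|h|)) ->
  derivable g s 1 /\ derive1 g s = D.
Proof.
move=> r0 A0 B0 H.
have cv : (fun h => h^-1 *: (g (h + s) - g s)) @ 0^' --> D.
  apply/cvgrPdist_le => e e0.
  have e2 : 0 < e / 2 by rewrite divr_gt0.
  have e3 : 0 < e / 2 / (A + 1) by rewrite divr_gt0 // ltr_wpDl.
  have [r1 r10 Hr1] := small_powR e3.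
  have r2 : 0 < e / 2 / (B + 1) by rewrite divr_gt0 // ltr_wpDl.
  near=> h.
  have hn : h != 0 by near: h; exact: nbhs_dnbhs_neq.
  have hr : `|h| < rho by near: h; exact: dnbhs0_lt.
  have h1 : `|h| < r1 by near: h; exact: dnbhs0_lt.
  have h2 : `|h| < e / 2 / (B + 1) by near: h; exact: dnbhs0_lt.
  have hp : 0 < `|h| by rewrite normr_gt0.
  have := H h hn hr.
  move=> Hb.
  rewrite -[X in `|X| <= _]/(D - h^-1 * (g (h + s) - g s)).
  have -> : D - h^-1 * (g (h + s) - g s) = - (h^-1 * (g (h + s) - g s - h * D)).
    by field.
  rewrite normrN normrM normfV ler_pdivrMl //.
  apply: le_trans Hb _; rewrite ler_pM2l //.
  have p1 : A * powR `|h| delta <= e / 2.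
    have := Hr1 _ (normr_ge0 h) h1 => /ltW /(ler_wpM2l A0).
    move/le_trans; apply.
    rewrite mulrCA ger_pMr // ler_pdivrMr ?ltr_wpDl // mul1r lerDl //.
  have p2 : B * `|h| <= e / 2.
    have := ltW h2 => /(ler_wpM2l B0) /le_trans; apply.
    rewrite mulrCA ger_pMr // ler_pdivrMr ?ltr_wpDl // mul1r lerDl //.
  rewrite /= mulrC; lra.
have E : (fun h : R => h^-1 *: ((g \o shift s) (h *: 1) - g s)) =
         (fun h => h^-1 *: (g (h + s) - g s)).
  by apply/funext => h /=; rewrite /shift /= scaler1.
split.
  by rewrite /derivable E; apply/cvg_ex; exists D.
by rewrite /derive1 (cvg_lim _ cv).
Unshelve. all: by end_near.
Qed.

End Deriv.

Lemma open_coord_ball (R : realType) (d : nat) (U : set 'rV[R]_d) (x : 'rV[R]_d) :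
  open U -> U x -> exists2 e : R, 0 < e &
    forall l : 'rV[R]_d, (forall i, `|l 0 i - x 0 i| < e) -> U l.
Proof.
move=> oU Ux.
have : nbhs x U by apply: open_nbhs_nbhs; split.
move=> /nbhs_ballP [e e0 He]; exists e => // l Hl; apply: (He l).
rewrite mx_norm_ball /ball_ /=; change (mx_norm (x - l) < e).
have [->|n0] := eqVneq (mx_norm (x - l)) 0; first by [].
have [[i j] ->] := mx_norm_neq0 n0.
rewrite /= (ord1 i) !mxE distrC; exact: Hl.
Qed.

Section Main.
Variables (R : realType) (d m : nat) (a b : R) (f : 'I_m -> 'rV[R]_d -> R -> R).
Variables (V : set 'rV[R]_d) (delta gamma2 C : R) (lam0 : 'rV[R]_d) (r : R).
Hypothesis Hab : a <= b.
Hypothesis Hdel : 0 < delta.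
Hypothesis Hg0 : 0 <= gamma2.
Hypothesis Hg1 : gamma2 < 1.
Hypothesis HC0 : 0 <= C.
Hypothesis Hmap : forall j lam x, V lam -> a <= x <= b -> a <= f j lam x <= b.
Hypothesis Hder : forall j lam x, V lam -> a <= x <= b ->
          derivable (f j lam) x 1 /\ derivable (Dx f j lam) x 1 /\
          forall i, derivable (fun l => f j l x) lam (ebasis R i) /\
                    derivable (fun l => Dx f j l x) lam (ebasis R i).
Hypothesis HB : forall j,
          [/\ bounded_on V a b C (Dx f j), bounded_on V a b C (Dxx f j),
              hoelder_on V a b C delta (Dxx f j) &
              forall i, [/\ bounded_on V a b C (Dl f i j), bounded_on V a b C (Dxl f i j),
                            hoelder_on V a b C delta (Dl f i j) &
                            hoelder_on V a b C delta (Dxl f i j)]].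
Hypothesis Hgam : forall j lam x, V lam -> a <= x <= b -> `|Dx f j lam x| <= gamma2.
Hypothesis Hr : 0 < r.
Hypothesis Hball : forall l, n1 (l - lam0) < 3 * r -> V l.

Definition W (l : 'rV[R]_d) := n1 (l - lam0) < r.

Lemma powR_le (x y : R) : 0 <= x -> x <= y -> powR x delta <= powR y delta.
Proof. by move=> x0 xy; apply: ge0_ler_powR; rewrite ?nnegrE ?(ltW Hdel) ?(le_trans x0). Qed.

Lemma isd_x j lam z : V lam -> a <= z <= b -> is_derive z 1 (f j lam) (Dx f j lam z).
Proof. move=> Vl hz; have [h _] := Hder j Vl hz; rewrite /Dx derive1E; exact: derivableP. Qed.

Lemma isd_xx j lam z : V lam -> a <= z <= b -> is_derive z 1 (Dx f j lam) (Dxx f j lam z).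
Proof. move=> Vl hz; have [_ [h _]] := Hder j Vl hz; rewrite /Dxx derive1E; exact: derivableP. Qed.

Lemma between_ab (x y z : R) : a <= x <= b -> a <= y <= b ->
  Num.min x y <= z <= Num.max x y -> a <= z <= b.
Proof.
move=> /andP[x1 x2] /andP[y1 y2]; case: (leP x y) => xy /andP[h1 h2]; apply/andP; split; lra.
Qed.

Lemma between_dist (x y z : R) : Num.min x y <= z <= Num.max x y -> `|z - y| <= `|x - y|.
Proof.
case: (leP x y) => xy /andP[h1 h2].
  rewrite ler0_norm ?subr_le0 // ler0_norm ?subr_le0 //; lra.
rewrite ger0_norm ?subr_ge0 // ger0_norm ?subr_ge0 ?(ltW xy) //; lra.
Qed.

Lemma lip_x j lam x y : V lam -> a <= x <= b -> a <= y <= b ->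
  `|f j lam x - f j lam y| <= gamma2 * `|x - y|.
Proof.
move=> Vl hx hy.
have [c [hc e]] := @mvt1 R (f j lam) (Dx f j lam) y x
  (fun z hz => isd_x j Vl (between_ab hy hx hz)).
rewrite e normrM; apply: ler_wpM2r => //; apply: Hgam => //.
exact: between_ab hy hx hc.
Qed.

Lemma lip_Dx j lam x y : V lam -> a <= x <= b -> a <= y <= b ->
  `|Dx f j lam x - Dx f j lam y| <= C * `|x - y|.
Proof.
move=> Vl hx hy.
have [c [hc e]] := @mvt1 R (Dx f j lam) (Dxx f j lam) y x
  (fun z hz => isd_xx j Vl (between_ab hy hx hz)).
rewrite e normrM; apply: ler_wpM2r => //.
have [_ Bxx _ _] := HB j; apply: Bxx => //; exact: between_ab hy hx hc.
Qed.

Lemma taylor_x j lam x y : V lam -> a <= x <= b -> a <= y <= b ->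
  `|f j lam x - f j lam y - Dx f j lam y * (x - y)| <= C * `|x - y| ^+ 2.
Proof.
move=> Vl hx hy.
have [c [hc e]] := @mvt1 R (f j lam) (Dx f j lam) y x
  (fun z hz => isd_x j Vl (between_ab hy hx hz)).
rewrite e -mulrBl normrM expr2 mulrA; apply: ler_wpM2r => //.
apply: le_trans (lip_Dx j Vl (between_ab hy hx hc) hy) _.
apply: ler_wpM2l => //; apply: between_dist.
by rewrite minC maxC.
Qed.

Lemma W_pt l mu c : W l -> W mu -> n1 c <= n1 (mu - l) -> V (l + c).
Proof.
rewrite /W => hl hm hc; apply: Hball.
have h1 : n1 (mu - l) <= n1 (mu - lam0) + n1 (lam0 - l).
  by apply: le_trans (n1D _ _); rewrite addrA subrK.
have h2 : n1 (l + c - lam0) <= n1 (l - lam0) + n1 c.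
  by apply: le_trans (n1D _ _); rewrite addrAC.
rewrite (n1B lam0 l) in h1; lra.
Qed.

Lemma W_V l : W l -> V l.
Proof. by move=> hl; have := @W_pt l l 0 hl hl; rewrite addr0; apply; rewrite subrr. Qed.

Lemma sum_abs_le (w : 'rV[R]_d) (g : 'I_d -> R) (K : R) :
  (forall i, `|g i| <= K) -> `|\sum_(i < d) w 0 i * g i| <= n1 w * K.
Proof.
move=> H; apply: le_trans (ler_norm_sum _ _ _) _.
rewrite /n1 mulr_suml; apply: ler_sum => i _; rewrite normrM.
by apply: ler_wpM2l.
Qed.

Lemma isd_l j i l x : V l -> a <= x <= b ->
  is_derive l (ebasis R i) (fun l' => f j l' x) (Dl f i j l x).
Proof. move=> Vl hx; have [_ [_ /(_ i) [h _]]] := Hder j Vl hx; exact: derivableP. Qed.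

Lemma isd_lDx j i l x : V l -> a <= x <= b ->
  is_derive l (ebasis R i) (fun l' => Dx f j l' x) (Dxl f i j l x).
Proof. move=> Vl hx; have [_ [_ /(_ i) [_ h]]] := Hder j Vl hx; exact: derivableP. Qed.

Lemma lip_l j l mu x : W l -> W mu -> a <= x <= b ->
  `|f j mu x - f j l x| <= C * n1 (mu - l).
Proof.
move=> hl hm hx.
have [c [Hc e]] := @coord_mvt R d (fun l' => f j l' x) (fun i l' => Dl f i j l' x) l (mu - l)
  (fun i c hc => @isd_l j i _ _ (W_pt hl hm hc) hx).
rewrite /= [l + (mu - l)]addrC subrK in e; rewrite e mulrC; apply: sum_abs_le => i.
have [_ _ _ /(_ i) [Bl _ _ _]] := HB j; apply: Bl => //; exact: W_pt hl hm (Hc i).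
Qed.

Lemma lip_lDx j l mu x : W l -> W mu -> a <= x <= b ->
  `|Dx f j mu x - Dx f j l x| <= C * n1 (mu - l).
Proof.
move=> hl hm hx.
have [c [Hc e]] := @coord_mvt R d (fun l' => Dx f j l' x) (fun i l' => Dxl f i j l' x) l (mu - l)
  (fun i c hc => @isd_lDx j i _ _ (W_pt hl hm hc) hx).
rewrite /= [l + (mu - l)]addrC subrK in e; rewrite e mulrC; apply: sum_abs_le => i.
have [_ _ _ /(_ i) [_ Bl _ _]] := HB j; apply: Bl => //; exact: W_pt hl hm (Hc i).
Qed.

Lemma lin_l j l mu x : W l -> W mu -> a <= x <= b ->
  `|f j mu x - f j l x - \sum_(i < d) (mu - l) 0 i * Dl f i j l x|
    <= C * n1 (mu - l) * powR (n1 (mu - l)) delta.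
Proof.
move=> hl hm hx.
have [c [Hc e]] := @coord_mvt R d (fun l' => f j l' x) (fun i l' => Dl f i j l' x) l (mu - l)
  (fun i c hc => @isd_l j i _ _ (W_pt hl hm hc) hx).
rewrite /= [l + (mu - l)]addrC subrK in e; rewrite e -sumrB.
under eq_bigr do rewrite -mulrBr.
rewrite [C * _]mulrC -mulrA; apply: sum_abs_le => i.
have [_ _ _ /(_ i) [_ _ [_ Hl] _]] := HB j.
apply: le_trans (Hl _ _ _ (W_pt hl hm (Hc i)) (W_V hl) hx) _.
rewrite addrAC subrr add0r; apply: ler_wpM2l => //; apply: powR_le.
  by rewrite /enorm sqrtr_ge0.
apply: le_trans (enorm_le_n1 _) (Hc i).
Qed.

Definition sh (w : nat -> 'I_m) : nat -> 'I_m := fun k => w k.+1.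

Lemma fcompS l w n x : fcomp f l w n.+1 x = f (w 0%N) l (fcomp f l (sh w) n x).
Proof. by elim: n x => [|n IH] x //=; rewrite -IH. Qed.

Lemma fcomp_ab l w n x : V l -> a <= x <= b -> a <= fcomp f l w n x <= b.
Proof. by move=> Vl; elim: n x => [|n IH] x hx //=; apply: IH; apply: Hmap. Qed.

Lemma fcomp_contr l w n x y : V l -> a <= x <= b -> a <= y <= b ->
  `|fcomp f l w n x - fcomp f l w n y| <= gamma2 ^+ n * `|x - y|.
Proof.
move=> Vl; elim: n x y => [|n IH] x y hx hy /=; first by rewrite expr0 mul1r.
apply: le_trans (IH _ _ (Hmap _ Vl hx) (Hmap _ Vl hy)) _.
rewrite exprSr -mulrA; apply: ler_wpM2l; first exact: exprn_ge0.
exact: lip_x.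
Qed.

Lemma ab_a : a <= a <= b. Proof. by rewrite lexx Hab. Qed.

Lemma Pi_cvg l w : V l -> cvgn (fun n => fcomp f l w n a).
Proof.
move=> Vl; apply: (@geo_cvg R _ a (b - a) gamma2); rewrite ?Hg0 ?Hg1 ?subr_ge0 //.
  by move=> n; have /andP[] := fcomp_ab w n Vl ab_a.
move=> n /=; apply: le_trans (fcomp_contr _ _ Vl (Hmap _ Vl ab_a) ab_a) _.
rewrite mulrC; apply: ler_wpM2r; first exact: exprn_ge0.
have /andP[h1 h2] := Hmap (w n) Vl ab_a; rewrite ger0_norm ?subr_ge0 //; lra.
Qed.

Lemma Pi_ab l w : V l -> a <= Pi f a l w <= b.
Proof.
move=> Vl; apply/andP; split.
  apply: limr_ge; first exact: Pi_cvg.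
  by near=> n; have /andP[] := fcomp_ab w n Vl ab_a.
apply: limr_le; first exact: Pi_cvg.
by near=> n; have /andP[] := fcomp_ab w n Vl ab_a.
Unshelve. all: by end_near.
Qed.

Lemma Pi_rec l w : V l -> Pi f a l w = f (w 0%N) l (Pi f a l (sh w)).
Proof.
move=> Vl.
have c1 : (fun n => fcomp f l (sh w) n a) @ \oo --> Pi f a l (sh w).
  exact: Pi_cvg.
have cont : {for Pi f a l (sh w), continuous (f (w 0%N) l)}.
  apply: differentiable_continuous; apply/derivable1_diffP.
  by have [] := Hder (w 0%N) Vl (Pi_ab (sh w) Vl).
have c2 := continuous_cvg _ cont c1.
have c3 : (fun n => fcomp f l w n a) @ \oo --> f (w 0%N) l (Pi f a l (sh w)).
  rewrite -cvg_shiftS.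
  have -> : [sequence fcomp f l w n.+1 a]_n =
      (f (w 0%N) l \o fun n => fcomp f l (sh w) n a).
    by apply/funext => n; rewrite /= -fcompS.
  exact: c2.
by rewrite /Pi (cvg_lim _ c3).
Qed.

Definition K1 := C / (1 - gamma2).

Lemma g1pos : 0 < 1 - gamma2. Proof. by rewrite subr_gt0. Qed.

Lemma K1_ge0 : 0 <= K1. Proof. by rewrite /K1 divr_ge0 // ltW // g1pos. Qed.

Lemma K1_eq : C + gamma2 * K1 = K1.
Proof. by rewrite /K1; field; rewrite subr_eq0 eq_sym lt_eqF. Qed.

Lemma Pi_lip l mu w : W l -> W mu ->
  `|Pi f a mu w - Pi f a l w| <= K1 * n1 (mu - l).
Proof.
move=> hl hm.
have Vl := W_V hl; have Vm := W_V hm.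
have := @contr_bound R _ sh (fun w => `|Pi f a mu w - Pi f a l w|) (C * n1 (mu - l))
  (b - a) gamma2 _ _ _ _ w.
rewrite /K1 mulrAC; apply; rewrite ?Hg0 ?Hg1 ?mulr_ge0 ?n1_ge0 //.
  move=> t; have /andP[h1 h2] := Pi_ab t Vl; have /andP[h3 h4] := Pi_ab t Vm.
  rewrite ler_norml; apply/andP; split; lra.
move=> t; rewrite (Pi_rec t Vl) (Pi_rec t Vm).
set y := Pi f a l (sh t); set y' := Pi f a mu (sh t).
have hy := Pi_ab (sh t) Vl; have hy' := Pi_ab (sh t) Vm.
rewrite -[X in `|X|](subrKA (f (t 0%N) l y')).
apply: le_trans (ler_normD _ _) _; apply: lerD.
  exact: lip_l.
exact: lip_x.
Qed.

Fixpoint Lcn (l : 'rV[R]_d) (i : 'I_d) (n : nat) (w : nat -> 'I_m) : R :=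
  match n with
  | 0 => 0
  | n'.+1 => Dl f i (w 0%N) l (Pi f a l (sh w))
             + Dx f (w 0%N) l (Pi f a l (sh w)) * Lcn l i n' (sh w)
  end.

Definition Lc l i w := limn (fun n => Lcn l i n w).

Lemma Lcn_bound l i n w : V l -> `|Lcn l i n w| <= K1.
Proof.
move=> Vl; elim: n w => [|n IH] w /=; first by rewrite normr0 K1_ge0.
have hy := Pi_ab (sh w) Vl.
apply: le_trans (ler_normD _ _) _; rewrite -K1_eq; apply: lerD.
  by have [_ _ _ /(_ i) [Bl _ _ _]] := HB (w 0%N); apply: Bl.
rewrite normrM; apply: ler_pM => //; exact: Hgam.
Qed.

Lemma Lcn_diff l i n w : V l -> `|Lcn l i n.+1 w - Lcn l i n w| <= C * gamma2 ^+ n.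
Proof.
move=> Vl; elim: n w => [|n IH] w.
  rewrite /= mulr0 !addr0 subr0 expr0 mulr1.
  by have [_ _ _ /(_ i) [Bl _ _ _]] := HB (w 0%N); apply: Bl => //; exact: Pi_ab.
rewrite [Lcn _ _ n.+2 _]/= [Lcn _ _ n.+1 w]/= opprD addrACA subrr add0r -mulrBr.
rewrite normrM exprS mulrCA; apply: ler_pM => //; first by apply: Hgam => //; exact: Pi_ab.
exact: IH.
Qed.

Lemma Lc_cvg l i w : V l -> cvgn (fun n => Lcn l i n w).
Proof.
move=> Vl; apply: (@geo_cvg R _ (- K1) C gamma2); rewrite ?Hg0 ?Hg1 //.
  by move=> n; have := Lcn_bound i n w Vl; rewrite ler_norml => /andP[].
by move=> n; exact: Lcn_diff.
Qed.

Lemma Lc_bound l i w : V l -> `|Lc l i w| <= K1.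
Proof.
move=> Vl; rewrite ler_norml; apply/andP; split.
  apply: limr_ge; first exact: Lc_cvg.
  by near=> n; have := Lcn_bound i n w Vl; rewrite ler_norml => /andP[].
apply: limr_le; first exact: Lc_cvg.
by near=> n; have := Lcn_bound i n w Vl; rewrite ler_norml => /andP[].
Unshelve. all: by end_near.
Qed.

Lemma Lc_rec l i w : V l -> Lc l i w =
  Dl f i (w 0%N) l (Pi f a l (sh w)) + Dx f (w 0%N) l (Pi f a l (sh w)) * Lc l i (sh w).
Proof.
move=> Vl.
have c1 : (fun n => Lcn l i n (sh w)) @ \oo --> Lc l i (sh w) by exact: Lc_cvg.
have c3 : (fun n => Lcn l i n w) @ \oo --> Dl f i (w 0%N) l (Pi f a l (sh w))
     + Dx f (w 0%N) l (Pi f a l (sh w)) * Lc l i (sh w).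
  rewrite -cvg_shiftS /=; apply: cvgD; first exact: cvg_cst.
  exact: cvgMr.
by rewrite /Lc (cvg_lim _ c3).
Qed.

Definition K2 := (C + C * powR K1 delta + (C + C * K1) * K1) / (1 - gamma2).

Lemma enorm_ge0 (v : 'rV[R]_d) : 0 <= enorm v.
Proof. by rewrite /enorm sqrtr_ge0. Qed.

Lemma Lc_cont l mu i w : W l -> W mu ->
  `|Lc mu i w - Lc l i w| <= K2 * (powR (n1 (mu - l)) delta + n1 (mu - l)).
Proof.
move=> hl hm.
have Vl := W_V hl; have Vm := W_V hm.
set t := n1 (mu - l).
have t0 : 0 <= t by exact: n1_ge0.
have pK : powR (K1 * t) delta = powR K1 delta * powR t delta by rewrite powRM ?K1_ge0.
set A := C * powR t delta + C * powR (K1 * t) delta + (C + C * K1) * t * K1.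
have A0 : 0 <= A.
  have k := K1_ge0.
  have q1 : 0 <= C * powR t delta by rewrite mulr_ge0 ?powR_ge0.
  have q2 : 0 <= C * powR (K1 * t) delta by rewrite mulr_ge0 ?powR_ge0.
  have q3 : 0 <= (C + C * K1) * t * K1.
    by apply: mulr_ge0 => //; apply: mulr_ge0 => //; apply: addr_ge0 => //; apply: mulr_ge0.
  rewrite /A; lra.
have := @contr_bound R _ sh (fun w => `|Lc mu i w - Lc l i w|) A (K1 + K1) gamma2 _ A0 _ _ w.
move=> H; apply: le_trans (H _ _ _) _; rewrite ?Hg0 ?Hg1 //.
- move=> u; apply: le_trans (ler_normB _ _) _; apply: lerD; exact: Lc_bound.
- move=> u; rewrite (Lc_rec i u Vl) (Lc_rec i u Vm).
  set y := Pi f a l (sh u); set y' := Pi f a mu (sh u).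
  have hy := Pi_ab (sh u) Vl; have hy' := Pi_ab (sh u) Vm.
  have dy : `|y' - y| <= K1 * t by exact: Pi_lip.
  set L := Lc l i (sh u); set L' := Lc mu i (sh u).
  have -> : Dl f i (u 0%N) mu y' + Dx f (u 0%N) mu y' * L'
        - (Dl f i (u 0%N) l y + Dx f (u 0%N) l y * L) =
        (Dl f i (u 0%N) mu y' - Dl f i (u 0%N) l y') + (Dl f i (u 0%N) l y' - Dl f i (u 0%N) l y)
        + ((Dx f (u 0%N) mu y' - Dx f (u 0%N) l y') + (Dx f (u 0%N) l y' - Dx f (u 0%N) l y)) * L'
        + Dx f (u 0%N) l y * (L' - L) by ring.
  have [_ _ _ /(_ i) [_ _ [Hx Hl] _]] := HB (u 0%N).
  apply: le_trans (ler_normD _ _) _; apply: lerD; last first.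
    rewrite normrM; apply: ler_pM => //; exact: Hgam.
  apply: le_trans (ler_normD _ _) _; rewrite /A; apply: lerD.
    apply: le_trans (ler_normD _ _) _; apply: lerD.
      apply: le_trans (Hl _ _ _ Vm Vl hy') _; apply: ler_wpM2l => //.
      apply: powR_le; first exact: enorm_ge0.
      exact: enorm_le_n1.
    apply: le_trans (Hx _ _ _ Vl hy' hy) _; apply: ler_wpM2l => //.
    exact: powR_le.
  rewrite normrM; apply: ler_pM => //; last exact: Lc_bound.
  apply: le_trans (ler_normD _ _) _; rewrite mulrDl; apply: lerD.
    exact: lip_lDx.
  rewrite -mulrA; apply: le_trans (lip_Dx _ Vl hy' hy) _; apply: ler_wpM2l => //.
- rewrite /K2 mulrAC; apply: ler_wpM2r; first by rewrite invr_ge0 ltW // g1pos.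
  rewrite /A pK; set P := powR t delta; have P0 : 0 <= P by exact: powR_ge0.
  have pk0 : 0 <= powR K1 delta by exact: powR_ge0.
  have CK : 0 <= C * K1 by rewrite mulr_ge0 ?K1_ge0.
  have CKK : 0 <= (C + C * K1) * K1 by rewrite mulr_ge0 ?addr_ge0 ?K1_ge0.
  have CP : 0 <= C * powR K1 delta by rewrite mulr_ge0.
  rewrite !mulrDl !mulrDr.
  have e1 : C * (powR K1 delta * P) = C * powR K1 delta * P by rewrite mulrA.
  have e2 : (C + C * K1) * t * K1 = (C + C * K1) * K1 * t by rewrite mulrAC.
  have e3 : C * t * K1 = C * K1 * t by rewrite mulrAC.
  have e4 : C * K1 * t * K1 = C * K1 * K1 * t by rewrite mulrAC.
  rewrite e1 e3 e4.
  have h1 : 0 <= C * t by rewrite mulr_ge0.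
  have h2 : 0 <= C * powR K1 delta * t by rewrite mulr_ge0.
  have h3 : 0 <= C * K1 * P by rewrite mulr_ge0.
  have h4 : 0 <= C * K1 * K1 * P by rewrite mulr_ge0 // mulr_ge0 // K1_ge0.
  lra.
Qed.

Definition Lv l (v : 'rV[R]_d) w := \sum_(i < d) v 0 i * Lc l i w.

Lemma Lv_bound l v w : V l -> `|Lv l v w| <= n1 v * K1.
Proof. by move=> Vl; apply: sum_abs_le => i; exact: Lc_bound. Qed.

Lemma Lv_rec l v w : V l -> Lv l v w =
  \sum_(i < d) v 0 i * Dl f i (w 0%N) l (Pi f a l (sh w))
  + Dx f (w 0%N) l (Pi f a l (sh w)) * Lv l v (sh w).
Proof.
move=> Vl; rewrite /Lv mulr_sumr -big_split /=; apply: eq_bigr => i _.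
by rewrite (Lc_rec i w Vl) mulrDr mulrCA.
Qed.

Definition K3 := (C + C * powR K1 delta + C * K1 ^+ 2) / (1 - gamma2).

Lemma E_est l mu w : W l -> W mu ->
  `|Pi f a mu w - Pi f a l w - Lv l (mu - l) w| <=
     K3 * (n1 (mu - l) * (powR (n1 (mu - l)) delta + n1 (mu - l))).
Proof.
move=> hl hm.
have Vl := W_V hl; have Vm := W_V hm.
set t := n1 (mu - l).
have t0 : 0 <= t by exact: n1_ge0.
have k0 := K1_ge0.
have pK : powR (K1 * t) delta = powR K1 delta * powR t delta by rewrite powRM ?K1_ge0.
set P := powR t delta; have P0 : 0 <= P by exact: powR_ge0.
have pk0 : 0 <= powR K1 delta by exact: powR_ge0.
set A := C * t * P + t * (C * powR (K1 * t) delta) + C * (K1 * t) ^+ 2.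
have A0 : 0 <= A.
  have q1 : 0 <= C * t * P by rewrite !mulr_ge0.
  have q2 : 0 <= t * (C * powR (K1 * t) delta) by rewrite !mulr_ge0 ?powR_ge0.
  have q3 : 0 <= C * (K1 * t) ^+ 2 by rewrite mulr_ge0 ?sqr_ge0.
  rewrite /A; lra.
have := @contr_bound R _ sh (fun w => `|Pi f a mu w - Pi f a l w - Lv l (mu - l) w|)
  A ((b - a) + t * K1) gamma2 _ A0 _ _ w.
move=> H; apply: le_trans (H _ _ _) _; rewrite ?Hg0 ?Hg1 //.
- move=> u; apply: le_trans (ler_normB _ _) _; apply: lerD; last exact: Lv_bound.
  have /andP[h1 h2] := Pi_ab u Vl; have /andP[h3 h4] := Pi_ab u Vm.
  rewrite ler_norml; apply/andP; split; lra.
- move=> u; rewrite (Pi_rec u Vl) (Pi_rec u Vm) (Lv_rec _ u Vl).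
  set y := Pi f a l (sh u); set y' := Pi f a mu (sh u).
  have hy := Pi_ab (sh u) Vl; have hy' := Pi_ab (sh u) Vm.
  have dy : `|y' - y| <= K1 * t by exact: Pi_lip.
  have E1 := lin_l (u 0%N) hl hm hy'.
  set S1 := \sum_(i < d) (mu - l) 0 i * Dl f i (u 0%N) l y'.
  set S2 := \sum_(i < d) (mu - l) 0 i * Dl f i (u 0%N) l y.
  have eS : S1 - S2 = \sum_(i < d) (mu - l) 0 i * (Dl f i (u 0%N) l y' - Dl f i (u 0%N) l y).
    by rewrite /S1 /S2 -sumrB; apply: eq_bigr => i _; rewrite mulrBr.
  set L := Lv l (mu - l) (sh u).
  have -> : f (u 0%N) mu y' - f (u 0%N) l y - (S2 + Dx f (u 0%N) l y * L) =
     (f (u 0%N) mu y' - f (u 0%N) l y' - S1) + (S1 - S2)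
     + (f (u 0%N) l y' - f (u 0%N) l y - Dx f (u 0%N) l y * (y' - y))
     + Dx f (u 0%N) l y * (y' - y - L) by ring.
  apply: le_trans (ler_normD _ _) _; apply: lerD; last first.
    rewrite normrM; apply: ler_pM => //; exact: Hgam.
  apply: le_trans (ler_normD _ _) _; rewrite /A; apply: lerD.
    apply: le_trans (ler_normD _ _) _; apply: lerD; first exact: E1.
    rewrite eS; apply: sum_abs_le => i.
    have [_ _ _ /(_ i) [_ _ [Hx _] _]] := HB (u 0%N).
    apply: le_trans (Hx _ _ _ Vl hy' hy) _; apply: ler_wpM2l => //.
    exact: powR_le.
  apply: le_trans (taylor_x _ Vl hy' hy) _; apply: ler_wpM2l => //.
  by rewrite !expr2; apply: ler_pM.
- rewrite /K3 mulrAC; apply: ler_wpM2r; first by rewrite invr_ge0 ltW // g1pos.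
  rewrite /A pK exprMn -/P.
  have e1 : C * t * P = C * (t * P) by rewrite mulrA.
  have e2 : t * (C * (powR K1 delta * P)) = C * powR K1 delta * (t * P).
    by ring.
  have e3 : C * (K1 ^+ 2 * t ^+ 2) = C * K1 ^+ 2 * (t * t) by ring.
  rewrite e1 e2 e3 !mulrDl !mulrDr.
  have h1 : 0 <= C * (t * t) by rewrite !mulr_ge0.
  have h2 : 0 <= C * powR K1 delta * (t * t) by rewrite !mulr_ge0.
  have h3 : 0 <= C * K1 ^+ 2 * (t * P) by apply: mulr_ge0; [apply: mulr_ge0 => //; apply: exprn_ge0|apply: mulr_ge0].
  lra.
Qed.

Lemma K2_ge0 : 0 <= K2.
Proof.
have k := K1_ge0; have g := g1pos.
have h1 : 0 <= C * powR K1 delta by apply: mulr_ge0 => //; exact: powR_ge0.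
have h2 : 0 <= C * K1 by apply: mulr_ge0.
have h3 : 0 <= (C + C * K1) * K1 by apply: mulr_ge0; [exact: addr_ge0|exact: k].
rewrite /K2; apply: divr_ge0; last exact: ltW.
by apply: addr_ge0 => //; apply: addr_ge0.
Qed.

Lemma K3_ge0 : 0 <= K3.
Proof.
have k := K1_ge0; have g := g1pos.
have h1 : 0 <= C * powR K1 delta by apply: mulr_ge0 => //; exact: powR_ge0.
have h3 : 0 <= C * K1 ^+ 2 by apply: mulr_ge0 => //; exact: exprn_ge0.
rewrite /K3; apply: divr_ge0; last exact: ltW.
by apply: addr_ge0 => //; apply: addr_ge0.
Qed.

Lemma LvZ l (h : R) v w : Lv l (h *: v) w = h * Lv l v w.
Proof. by rewrite /Lv mulr_sumr; apply: eq_bigr => i _; rewrite mxE mulrA. Qed.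

Lemma Lv_ebasis l i w : Lv l (ebasis R i) w = Lc l i w.
Proof.
rewrite /Lv (bigD1 i) //= ebasisE eqxx mul1r big1 ?addr0 // => j ji.
by rewrite ebasisE eq_sym (negbTE ji) mul0r.
Qed.

Lemma Lv_cont l mu v w : W l -> W mu ->
  `|Lv mu v w - Lv l v w| <= n1 v * (K2 * (powR (n1 (mu - l)) delta + n1 (mu - l))).
Proof.
move=> hl hm; rewrite /Lv -sumrB; under eq_bigr do rewrite -mulrBr.
by apply: sum_abs_le => i; apply: Lc_cont.
Qed.

Lemma F_lip l mu w t : W l -> W mu ->
  `|(Pi f a mu w - Pi f a mu t) - (Pi f a l w - Pi f a l t)| <= 2 * K1 * n1 (mu - l).
Proof.
move=> hl hm.
have h1 := Pi_lip w hl hm; have h2 := Pi_lip t hl hm.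
have -> : Pi f a mu w - Pi f a mu t - (Pi f a l w - Pi f a l t) =
  (Pi f a mu w - Pi f a l w) - (Pi f a mu t - Pi f a l t) by ring.
apply: le_trans (ler_normB _ _) _; lra.
Qed.

Lemma line_deriv (q v : 'rV[R]_d) (s : R) (w t : nat -> 'I_m) : W (q + s *: v) ->
  derivable (fun s' : R => Pi f a (q + s' *: v) w - Pi f a (q + s' *: v) t) s 1 /\
  derive1 (fun s' : R => Pi f a (q + s' *: v) w - Pi f a (q + s' *: v) t) s
    = Lv (q + s *: v) v w - Lv (q + s *: v) v t.
Proof.
move=> hl; set l := q + s *: v.
set nv := n1 v; have nv0 : 0 <= nv by exact: n1_ge0.
have k3 := K3_ge0.
have rho0 : 0 < (r - n1 (l - lam0)) / (nv + 1).
  by rewrite divr_gt0 ?subr_gt0 // ltr_wpDl.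
apply: (@deriv_from_est R delta Hdel _ s _ (2 * K3 * nv * powR nv delta) (2 * K3 * nv * nv) _ rho0).
- by apply: mulr_ge0; [apply: mulr_ge0; [apply: mulr_ge0|]|apply: powR_ge0].
- by apply: mulr_ge0; [apply: mulr_ge0; [apply: mulr_ge0|]|].
move=> h hn hr.
have hmu : W (l + h *: v).
  rewrite /W.
  have H1 : n1 (l + h *: v - lam0) <= n1 (l - lam0) + `|h| * nv.
    by rewrite addrAC; apply: le_trans (n1D _ _) _; rewrite n1Z.
  have H3 : `|h| * nv <= `|h| * (nv + 1) by rewrite ler_wpM2l ?lerDl.
  have H2 : `|h| * (nv + 1) < r - n1 (l - lam0).
    by rewrite -ltr_pdivlMr ?ltr_wpDl.
  lra.
have eq1 : q + (h + s) *: v = l + h *: v by rewrite /l scalerDl [h *: v + _]addrC addrA.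
rewrite eq1.
have Ew := E_est w hl hmu; have Et := E_est t hl hmu.
have hp : powR (`|h| * nv) delta = powR `|h| delta * powR nv delta by rewrite powRM.
rewrite [l + _ - l]addrAC subrr add0r n1Z LvZ -/l -/nv hp in Ew.
rewrite [l + _ - l]addrAC subrr add0r n1Z LvZ -/l -/nv hp in Et.
have -> : Pi f a (l + h *: v) w - Pi f a (l + h *: v) t - (Pi f a l w - Pi f a l t)
   - h * (Lv l v w - Lv l v t) =
   (Pi f a (l + h *: v) w - Pi f a l w - h * Lv l v w)
   - (Pi f a (l + h *: v) t - Pi f a l t - h * Lv l v t) by ring.
apply: le_trans (ler_normB _ _) _.
have -> : `|h| * (2 * K3 * nv * powR nv delta * powR `|h| delta + 2 * K3 * nv * nv * `|h|) =
   K3 * (`|h| * nv * (powR `|h| delta * powR nv delta + `|h| * nv)) +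
   K3 * (`|h| * nv * (powR `|h| delta * powR nv delta + `|h| * nv)) by ring.
exact: lerD.
Qed.

Lemma D_as_derive1 (F : 'rV[R]_d -> R) (x v : 'rV[R]_d) :
  'D_v F x = derive1 (fun s => F (x + s *: v)) 0.
Proof.
have E : (fun h : R => h^-1 *: ((F \o shift x) (h *: v) - F x)) =
  (fun h : R => h^-1 *: ((fun s => F (x + s *: v)) (h + 0) - (fun s => F (x + s *: v)) 0)).
  by apply/funext => h /=; rewrite addr0 scale0r addr0 [h *: v + x]addrC.
by rewrite /derive /derive1 E.
Qed.

Lemma n1_0 : n1 (0 : 'rV[R]_d) = 0.
Proof. by rewrite /n1 big1 // => i _; rewrite mxE normr0. Qed.

Lemma enorm_ebasis (i : 'I_d) : enorm (ebasis R i) = 1.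
Proof.
rewrite /enorm /edot (bigD1 i) //= ebasisE eqxx mulr1 big1 ?addr0 ?sqrtr1 // => j ji.
by rewrite ebasisE (negbTE (_ : i != j)) ?mulr0 // eq_sym.
Qed.

Lemma main_inner (U : set 'rV[R]_d) (eta : R) :
  (0 < d)%N -> 0 < eta -> MT f U a eta ->
  (forall l, n1 (l - lam0) < 3 * r -> U l) ->
  exists eps0 : R, 0 < eps0 /\
    (forall l, enorm (l - lam0) < eps0 -> U l) /\
    forall w t : nat -> 'I_m, w 0%N != t 0%N ->
    exists e : 'rV[R]_d, enorm e = 1 /\
      forall p : 'rV[R]_d, enorm p < eps0 -> edot p e = 0 ->
      forall s : R, enorm (p + s *: e) < eps0 ->
        let g := fun s' : R => Pi f a (lam0 + p + s' *: e) w
                              - Pi f a (lam0 + p + s' *: e) t in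
        `|g s| < eta / 2 -> derivable g s 1 /\ eta / 2 <= `|derive1 g s|.
Proof.
move=> d0 eta0 HMT HU; have Hr0 := Hr.
have U0 : U lam0 by apply: HU; rewrite subrr n1_0 mulr_gt0.
have W0 : W lam0 by rewrite /W subrr n1_0.
set dd : R := d%:R.
have dd1 : 1 <= dd by rewrite /dd ler1n.
have k1 := K1_ge0; have k2 := K2_ge0.
set X := dd * K2.
have X0 : 0 <= X by rewrite /X mulr_ge0 //; lra.
set tau := eta / (8 * (X + 1)).
have tau0 : 0 < tau by rewrite /tau divr_gt0 // mulr_gt0 //; lra.
have htau : tau * (8 * (X + 1)) = eta by rewrite /tau divfK // gt_eqF // mulr_gt0 //; lra.
have [rho rho0 Hrho] := small_powR Hdel tau0.
set c1 := eta / (4 * (K1 + 1)).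
have c10 : 0 < c1 by rewrite /c1 divr_gt0 // mulr_gt0 //; lra.
have hc1 : c1 * (4 * (K1 + 1)) = eta by rewrite /c1 divfK // gt_eqF // mulr_gt0 //; lra.
set m0 := Num.min (Num.min (r / 2) c1) (Num.min rho tau).
have r20 : 0 < r / 2 by rewrite divr_gt0.
have m00 : 0 < m0 by rewrite /m0 !lt_min r20 c10 rho0 tau0.
have m1 : m0 <= r / 2 by rewrite /m0 !ge_min lexx.
have m2 : m0 <= c1 by rewrite /m0 !ge_min lexx !orbT.
have m3 : m0 <= rho by rewrite /m0 !ge_min lexx !orbT.
have m4 : m0 <= tau by rewrite /m0 !ge_min lexx !orbT.
set eps0 := m0 / dd.
have dd0 : 0 < dd by lra.
have eps00 : 0 < eps0 by rewrite /eps0 divr_gt0.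
have key : forall v : 'rV[R]_d, enorm v < eps0 -> n1 v < m0.
  move=> v hv; apply: le_lt_trans (n1_le_enorm v) _.
  by rewrite -ltr_pdivlMl // mulrC.
exists eps0; split => //; split.
  by move=> l hl; apply: HU; have := key _ hl; lra.
move=> w t hwt.
set F := fun l => Pi f a l w - Pi f a l t.
set G : 'rV[R]_d := \row_i (Lc lam0 i w - Lc lam0 i t).
have gradE : grad F lam0 = G.
  apply/rowP => i; rewrite !mxE D_as_derive1.
  have W0' : W (lam0 + 0 *: ebasis R i) by rewrite scale0r addr0.
  have [_ hD] := @line_deriv lam0 (ebasis R i) 0 w t W0'.
  apply: eq_trans hD _.
  by rewrite scale0r addr0 !Lv_ebasis.
have lamE : forall p s (e : 'rV[R]_d), lam0 + p + s *: e - lam0 = p + s *: e.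
  by move=> p s e; apply/eqP; rewrite subr_eq [_ + lam0]addrC addrA.
case: (ltP `|F lam0| eta) => HF.
- have hG : eta <= enorm G.
    have := HMT lam0 w t (subset_closure U0) hwt HF.
    by rewrite -/F gradE.
  have G0 : 0 < enorm G by apply: lt_le_trans hG.
  set e := (enorm G)^-1 *: G.
  exists e; split.
    by rewrite /e enormZ ger0_norm ?invr_ge0 ?(ltW G0) // mulVf // gt_eqF.
  move=> p hp _ s hs g hg.
  set l := lam0 + p + s *: e.
  have hl : n1 (l - lam0) < m0 by apply: key; rewrite /l lamE.
  have Wl : W l by rewrite /W; lra.
  have [der dval] := @line_deriv (lam0 + p) e s w t Wl.
  split; first exact: der.
  rewrite dval -/l.
  have hD0 : Lv lam0 e w - Lv lam0 e t = enorm G.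
    rewrite /Lv -sumrB.
    have -> : \sum_(i < d) (e 0 i * Lc lam0 i w - e 0 i * Lc lam0 i t) = edot e G.
      by rewrite /edot; apply: eq_bigr => i _; rewrite !mxE; ring.
    rewrite /e edotZl -enorm_sqr expr2 mulrA mulVf ?mul1r // gt_eqF //.
  have ne : n1 e <= dd.
    by apply: le_trans (n1_le_enorm e) _; rewrite /e enormZ ger0_norm ?invr_ge0 ?(ltW G0) // mulVf ?mulr1 // gt_eqF.
  set tl := n1 (l - lam0).
  have tl0 : 0 <= tl by exact: n1_ge0.
  have hP : powR tl delta < tau by apply: Hrho => //; apply: lt_le_trans hl m3.
  have hB : forall u, `|Lv l e u - Lv lam0 e u| <= X * (2 * tau).
    move=> u; apply: le_trans (Lv_cont e u W0 Wl) _; rewrite -/tl /X -mulrA.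
    apply: ler_pM => //; first exact: n1_ge0.
      by apply: mulr_ge0 => //; apply: addr_ge0 => //; exact: powR_ge0.
    by apply: ler_wpM2l => //; rewrite mulr_natl mulr2n; apply: lerD; [exact: ltW|apply: le_trans (ltW hl) m4].
  have hBw := hB w; have hBt := hB t.
  have h2 : X * (2 * tau) * 4 <= eta.
    have -> : X * (2 * tau) * 4 = 8 * (X * tau) by ring.
    have e1 : tau * (8 * (X + 1)) = 8 * (X * tau) + 8 * tau by ring.
    lra.
  have hD : Lv l e w - Lv l e t = (Lv lam0 e w - Lv lam0 e t)
     + (Lv l e w - Lv lam0 e w) - (Lv l e t - Lv lam0 e t) by ring.
  rewrite -/l.
  move: (hB w) (hB t); rewrite !ler_norml => /andP[a1 a2] /andP[a3 a4].
  have hN := ler_norm (Lv l e w - Lv l e t).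
  lra.
- exists (ebasis R (Ordinal d0)); split; first exact: enorm_ebasis.
  move=> p hp _ s hs g hg.
  set l := lam0 + p + s *: ebasis R (Ordinal d0).
  have hl : n1 (l - lam0) < m0 by apply: key; rewrite /l lamE.
  have Wl : W l by rewrite /W; lra.
  have hF : `|F l - F lam0| <= 2 * K1 * n1 (l - lam0) := F_lip w t W0 Wl.
  have hg' : `|F l| < eta / 2 by exact: hg.
  have hK : K1 * n1 (l - lam0) <= K1 * m0 by apply: ler_wpM2l => //; exact: ltW.
  have e1 : c1 * (4 * (K1 + 1)) = 4 * (K1 * c1) + 4 * c1 by ring.
  have hK2 : K1 * m0 <= K1 * c1 by apply: ler_wpM2l.
  exfalso.
  move: hF hg' HF; rewrite ler_norml ltr_norml ler_normr => /andP[f1 f2] /andP[f3 f4].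
  case/orP => f5; lra.
Qed.

End Main.

Lemma bounded_mono (R : realType) (d : nat) (V : set 'rV[R]_d) (a b C C' : R) g :
  C <= C' -> bounded_on V a b C g -> bounded_on V a b C' g.
Proof. by move=> CC H l x Vl hx; apply: le_trans (H l x Vl hx) CC. Qed.

Lemma hoelder_mono (R : realType) (d : nat) (V : set 'rV[R]_d) (a b C C' delta : R) g :
  C <= C' -> hoelder_on V a b C delta g -> hoelder_on V a b C' delta g.
Proof.
move=> CC [H1 H2]; split.
  move=> l x y Vl hx hy; apply: le_trans (H1 l x y Vl hx hy) _.
  by apply: ler_wpM2r => //; exact: powR_ge0.
move=> l mu x Vl Vm hx; apply: le_trans (H2 l mu x Vl Vm hx) _.
by apply: ler_wpM2r => //; exact: powR_ge0.
Qed.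

Unset Implicit Arguments.

Theorem mainTheorem11 (R : realType) (d m : nat) (a b : R)
  (f : 'I_m -> 'rV[R]_d -> R -> R) (U V : set 'rV[R]_d)
  (delta gamma1 gamma2 eta : R) :
  (0 < d)%N -> a < b ->
  open U -> (exists M : R, forall l, U l -> enorm l <= M) ->
  open V -> closure U `<=` V ->
  0 < delta < 1 -> 0 < gamma1 -> gamma1 <= gamma2 -> gamma2 < 1 ->
  MA f V a b delta gamma1 gamma2 ->
  0 < eta -> MT f U a eta ->
  forall lam0, U lam0 ->
  exists eps0 : R, 0 < eps0 /\
    (forall l, enorm (l - lam0) < eps0 -> U l) /\
    forall w t : nat -> 'I_m, w 0%N != t 0%N ->
    exists e : 'rV[R]_d, enorm e = 1 /\
      forall p : 'rV[R]_d, enorm p < eps0 -> edot p e = 0 ->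
      forall s : R, enorm (p + s *: e) < eps0 ->
        let g := fun s' : R => Pi f a (lam0 + p + s' *: e) w
                              - Pi f a (lam0 + p + s' *: e) t in
        `|g s| < eta / 2 -> derivable g s 1 /\ eta / 2 <= `|derive1 g s|.
Proof.
move=> d0 ab oU _ _ clUV /andP[del0 _] g10 g12 g21 HMA eta0 HMT lam0 Ul0.
case: HMA => Hmap Hder [C HBC] Hgam.
set C' := Num.max C 0.
have CC : C <= C' by rewrite le_max lexx.
have C0 : 0 <= C' by rewrite le_max lexx orbT.
have HB' : forall j,
    [/\ bounded_on V a b C' (Dx f j), bounded_on V a b C' (Dxx f j),
        hoelder_on V a b C' delta (Dxx f j) &
        forall i, [/\ bounded_on V a b C' (Dl f i j), bounded_on V a b C' (Dxl f i j),
                      hoelder_on V a b C' delta (Dl f i j) &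
                      hoelder_on V a b C' delta (Dxl f i j)]].
  move=> j; have [h1 h2 h3 h4] := HBC j; split.
  - exact: bounded_mono h1.
  - exact: bounded_mono h2.
  - exact: hoelder_mono h3.
  move=> i; have [k1 k2 k3 k4] := h4 i; split.
  - exact: bounded_mono k1.
  - exact: bounded_mono k2.
  - exact: hoelder_mono k3.
  - exact: hoelder_mono k4.
have Hgam2 : forall j lam x, V lam -> a <= x <= b -> `|Dx f j lam x| <= gamma2.
  by move=> j lam x Vl hx; have /andP[] := Hgam j lam x Vl hx.
have [r0 r00 Hr0] := open_coord_ball oU Ul0.
set r := r0 / 3.
have r0' : 0 < r by rewrite /r divr_gt0.
have HU : forall l, n1 (l - lam0) < 3 * r -> U l.
  move=> l hl; apply: Hr0 => i.
  have e3 : 3 * r = r0 by rewrite /r mulrC divfK.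
  rewrite e3 in hl.
  have := coord_le_n1 (l - lam0) i; rewrite !mxE => h.
  exact: le_lt_trans h hl.
have Hball : forall l, n1 (l - lam0) < 3 * r -> V l.
  by move=> l hl; apply: clUV; apply: subset_closure; apply: HU.
have g20 : 0 <= gamma2 by apply: ltW; apply: lt_le_trans g12.
exact: (main_inner (ltW ab) del0 g20 g21 C0 Hmap Hder HB' Hgam2 r0' Hball d0 eta0 HMT HU).
Qed.
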